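(* Let $\{Y_k\}$ be a fourth-order stationary sequence with $EY_k=0$, autocovariances $\gamma_j=\mathrm{Cov}(Y_0,Y_j)$ and cumulants $\kappa(h,r,s)$, satisfying: (a) $n^{-1/2}\sum_{1\le j\le nt}Y_j\xrightarrow{d}\sigma W(t)$ in $D[0,1]$ for some $\sigma>0$; (b) $\sum_j|\gamma_j|<\infty$; (c) $\sup_h\sum_{r,s}|\kappa(h,r,s)|<\infty$. For each $n$ let $X_i=\mu+Y_i$ for $1\le i\le k^*$ and $X_i=\mu+\Delta+Y_i$ for $k^*<i\le n$, where $k^*=[n\theta]$ for some $0<\theta<1$, and $\Delta=\Delta(n)$ satisfies $n\Delta^2\to\infty$, $\Delta^2|\hat k-k^*|=O_P(1)$ and $q(n)\Delta^2=O(1)$. Suppose $q(n)\to\infty$ and $q(n)/n\to0$. Then $s_n^2=O_P(1)$.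
   Context: Fourth-order stationary means finite fourth moments and shift-invariant joint moments of order at most four; $\kappa(h,r,s)=E[Y_kY_{k+h}Y_{k+r}Y_{k+s}]-(\gamma_h\gamma_{r-s}+\gamma_r\gamma_{h-s}+\gamma_s\gamma_{h-r})$. $q(n)$ is a sequence of positive integers, $\omega_j(q)=1-j/(q+1)$, $\bar X_n=\frac1n\sum_{i\le n}X_i$, $\hat\gamma_j=\frac1n\sum_{1\le i\le n-j}(X_i-\bar X_n)(X_{i+j}-\bar X_n)$, $s_n^2=\hat\gamma_0+2\sum_{1\le j\le q(n)}\omega_j(q(n))\hat\gamma_j$; $\hat k=\min\{k:\max_{1\le i\le n}|\sum_{j\le i}X_j-\frac in\sum_{j\le n}X_j|=|\sum_{j\le k}X_j-\frac kn\sum_{j\le n}X_j|\}$. *)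

(* Defs.v *)
From HB Require Import structures.
From mathcomp Require Import all_boot all_order all_algebra.
From mathcomp Require Import all_classical all_reals all_analysis.
Set Implicit Arguments. Unset Strict Implicit. Unset Printing Implicit Defensive.
Import Order.TTheory GRing.Theory Num.Theory.
Import numFieldNormedType.Exports.
Local Open Scope classical_set_scope.
Local Open Scope ring_scope.

Definition Ex {d} {T : measurableType d} {R : realType} (P : probability T R)
  (X : T -> R) : R := fine ('E_P[X])%E.

Definition fourth_order_stationary {d} {T : measurableType d} {R : realType}
  (P : probability T R) (Y : nat -> T -> R) : Prop :=
  [/\ (forall k, measurable_fun setT (Y k)),
      (forall k, P.-integrable setT (fun w => (Y k w ^+ 4)%:E)) &
   [/\ (forall k a, Ex P (Y (k + a)%N) = Ex P (Y a)),
      (forall k a b, Ex P (fun w => Y (k + a)%N w * Y (k + b)%N w)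
                     = Ex P (fun w => Y a w * Y b w)),
      (forall k a b c, Ex P (fun w => Y (k + a)%N w * Y (k + b)%N w * Y (k + c)%N w)
                     = Ex P (fun w => Y a w * Y b w * Y c w)) &
      (forall k a b c e,
         Ex P (fun w => Y (k + a)%N w * Y (k + b)%N w * Y (k + c)%N w * Y (k + e)%N w)
         = Ex P (fun w => Y a w * Y b w * Y c w * Y e w))]].

Definition cov {d} {T : measurableType d} {R : realType} (P : probability T R)
  (U V : T -> R) : R :=
  Ex P (fun w => (U w - Ex P U) * (V w - Ex P V)).

(** gamma_j = Cov(Y_0, Y_j) for j : int; for j < 0 this is, by stationarity,
    Cov(Y_{-j}, Y_0) = Cov(Y_0, Y_{|j|}). *)
Definition acov {d} {T : measurableType d} {R : realType} (P : probability T R)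
  (Y : nat -> T -> R) (j : int) : R := cov P (Y 0%N) (Y (absz j)).

(** kappa(h,r,s) = E[Y_k Y_{k+h} Y_{k+r} Y_{k+s}]
     - (g_h g_{r-s} + g_r g_{h-s} + g_s g_{h-r}),
    evaluated at the smallest admissible k = max(0,-h,-r,-s) (by stationarity
    any admissible k gives the same value). *)
Definition kappa {d} {T : measurableType d} {R : realType} (P : probability T R)
  (Y : nat -> T -> R) (h r s : int) : R :=
  let k0 : int := Num.max 0 (Num.max (- h) (Num.max (- r) (- s))) in
  Ex P (fun w => Y (absz k0) w * Y (absz (k0 + h)) w * Y (absz (k0 + r)) w
                 * Y (absz (k0 + s)) w)
  - (acov P Y h * acov P Y (r - s) + acov P Y r * acov P Y (h - s)
     + acov P Y s * acov P Y (h - r)).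

(** Paths are functions R -> R, only their restriction to [0,1] matters. *)
Definition cadlag {R : realType} (x : R -> R) : Prop :=
  (forall t, 0 <= t -> t < 1 -> x @ t^'+ --> x t) /\
  (forall t, 0 < t -> t <= 1 -> cvg (x @ t^'-)).

Definition time_change {R : realType} (lam : R -> R) : Prop :=
  [/\ (forall s t, 0 <= s -> s < t -> t <= 1 -> lam s < lam t),
      {within `[0, 1]%classic, continuous lam}, lam 0 = 0 & lam 1 = 1].

(** [skorokhod_close x y delta] : some time change lam satisfies
    sup_t |lam t - t| <= delta and sup_t |x t - y (lam t)| <= delta, i.e. the
    Skorokhod (J1) distance satisfies d(x,y) <= delta up to arbitrarily small
    slack. *)
Definition skorokhod_close {R : realType} (x y : R -> R) (delta : R) : Prop :=
  exists lam, time_change lam /\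
    forall t, 0 <= t -> t <= 1 -> `|lam t - t| < delta /\ `|x t - y (lam t)| < delta.

Definition skorokhod_continuous {R : realType} (f : (R -> R) -> R) : Prop :=
  forall x, cadlag x -> forall eps, 0 < eps -> exists2 delta, 0 < delta &
    forall y, cadlag y -> skorokhod_close x y delta -> `|f x - f y| < eps.

Definition bounded_on_D {R : realType} (f : (R -> R) -> R) : Prop :=
  exists M, forall x, cadlag x -> `|f x| <= M.

Definition brownian_motion {d'} {Om : measurableType d'} {R : realType}
  (Q : probability Om R) (W : R -> Om -> R) : Prop :=
  [/\ (forall t, measurable_fun setT (W t)),
      (forall w, W 0 w = 0),
      (forall w, {within `[0, 1]%classic, continuous (fun t => W t w)}),
      (forall s t, 0 <= s -> s < t -> t <= 1 -> forall A : set R, measurable A ->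
         Q [set w | A (W t w - W s w)] = normal_prob 0 (Num.sqrt (t - s)) A) &
      (forall (m : nat) (tt : nat -> R), 0 <= tt 0%N ->
         (forall i, (i < m)%N -> tt i < tt i.+1) -> tt m <= 1 ->
         forall A : nat -> set R, (forall i, measurable (A i)) ->
         Q (\bigcap_(i in `I_m) [set w | A i (W (tt i.+1) w - W (tt i) w)])
         = (\prod_(i < m) Q [set w | A i (W (tt i.+1) w - W (tt i) w)%R])%E)].

Definition psum_proc {T : Type} {R : realType} (Y : nat -> T -> R) (n : nat)
  (w : T) (t : R) : R :=
  (Num.sqrt n%:R)^-1 * \sum_(1 <= j < (Num.truncn (n%:R * t)).+1) Y j w.

Definition fclt {d} {T : measurableType d} {R : realType} (P : probability T R)
  (Y : nat -> T -> R) : Prop :=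
  exists2 sigma : R, 0 < sigma &
  exists (d' : measure_display) (Om : measurableType d') (Q : probability Om R)
         (W : R -> Om -> R),
    brownian_motion Q W /\
    forall f : (R -> R) -> R, skorokhod_continuous f -> bounded_on_D f ->
      (fun n => Ex P (fun w => f (psum_proc Y n w))) @ \oo -->
        Ex Q (fun w => f (fun t => sigma * W t w)).

Definition bounded_in_prob {d} {T : measurableType d} {R : realType}
  (P : probability T R) (Z : nat -> T -> R) : Prop :=
  forall eps : R, 0 < eps -> exists M : R, exists N : nat,
    forall n, (N <= n)%N -> (P [set w | (M < `|Z n w|)%R] < eps%:E)%E.

Definition kstar {R : realType} (theta : R) (n : nat) : nat :=
  Num.truncn (n%:R * theta).

Definition Xcp {T : Type} {R : realType} (mu : R) (Delta : nat -> R) (theta : R)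
  (Y : nat -> T -> R) (n i : nat) (w : T) : R :=
  if (i <= kstar theta n)%N then mu + Y i w else mu + Delta n + Y i w.

Definition Xbar {T : Type} {R : realType} (X : nat -> nat -> T -> R) (n : nat)
  (w : T) : R := n%:R^-1 * \sum_(1 <= i < n.+1) X n i w.

Definition gammahat {T : Type} {R : realType} (X : nat -> nat -> T -> R)
  (n j : nat) (w : T) : R :=
  n%:R^-1 * \sum_(1 <= i < (n - j).+1)
              (X n i w - Xbar X n w) * (X n (i + j)%N w - Xbar X n w).

Definition bartlett {R : realType} (q j : nat) : R := 1 - j%:R / (q.+1)%:R.

Definition s2 {T : Type} {R : realType} (X : nat -> nat -> T -> R)
  (q : nat -> nat) (n : nat) (w : T) : R :=
  gammahat X n 0 w
  + 2 * \sum_(1 <= j < (q n).+1) bartlett (q n) j * gammahat X n j w.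

Definition cusum {T : Type} {R : realType} (X : nat -> nat -> T -> R)
  (n i : nat) (w : T) : R :=
  `|\sum_(1 <= j < i.+1) X n j w - i%:R / n%:R * \sum_(1 <= j < n.+1) X n j w|.

Definition khat {T : Type} {R : realType} (X : nat -> nat -> T -> R)
  (n : nat) (w : T) : nat :=
  let M := \big[Num.max/0]_(1 <= i < n.+1) cusum X n i w in
  (find (fun k => cusum X n k w == M) (iota 1 n)).+1.

(* Main.v *)
Require Import Defs.
From HB Require Import structures.
From mathcomp Require Import all_boot all_order all_algebra.
From mathcomp Require Import all_classical all_reals all_analysis.
From mathcomp Require Import ring lra zify.
Import Order.TTheory GRing.Theory Num.Theory.
Import numFieldNormedType.Exports.
Set Implicit Arguments. Unset Strict Implicit.
Local Open Scope classical_set_scope.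
Local Open Scope ring_scope.
Notation mEFinP := measurable_realfun.measurable_EFinP.
Notation mfunM := measurable_realfun.measurable_funM.
Notation mfunD := measurable_realfun.measurable_funD.
Notation mfunB := measurable_realfun.measurable_funB.

Lemma sum_shift_zero2 (R : realFieldType) (g : nat -> R) (K a : nat) :
  (forall k, (k < a)%N -> g k = 0) ->
  \sum_(0 <= k < K + a) g k = \sum_(0 <= m < K) g (m + a)%N.
Proof.
move=> g0.
rewrite (@big_cat_nat _ _ _ a 0 (K + a)) ?leq_addl //=.
rewrite [X in X + _ = _]big1_seq ?add0r; last first.
  by move=> k /andP[_]; rewrite mem_index_iota => /andP[_ h]; exact: g0.
by rewrite -{1}(add0n a) big_addn addnK.
Qed.

Lemma sum_tail_zero (R : realFieldType) (g : nat -> R) (K L : nat) :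
  (K <= L)%N -> (forall k, (K <= k)%N -> g k = 0) ->
  \sum_(0 <= k < L) g k = \sum_(0 <= k < K) g k.
Proof.
move=> KL gK.
rewrite (@big_cat_nat _ _ _ K 0 L) //=.
rewrite [X in _ + X = _]big1_seq ?addr0 //.
by move=> k /andP[_]; rewrite mem_index_iota => /andP[h _]; exact: gK.
Qed.

Lemma sum_shift_zero (R : realFieldType) (g : nat -> R) (K a : nat) :
  (forall k, (k < a)%N -> g k = 0) -> (forall k, (K <= k)%N -> g k = 0) ->
  \sum_(0 <= m < K) g (m + a)%N = \sum_(0 <= k < K) g k.
Proof.
move=> g0 gK; rewrite -sum_shift_zero2 //; exact: sum_tail_zero (leq_addr _ _) gK.
Qed.

Definition cc (R : ringType) (z : nat -> R) (K j : nat) : R :=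
  \sum_(0 <= k < K) z k * z (k + j)%N.
Definition Sw (R : ringType) (z : nat -> R) (q m : nat) : R :=
  \sum_(0 <= a < q.+1) z (m + a)%N.

Lemma cc_shift (R : realFieldType) (z : nat -> R) (K Q a j : nat) :
  (forall k, (k < Q)%N -> z k = 0) -> (forall k, (K <= k)%N -> z k = 0) ->
  (a <= Q)%N ->
  \sum_(0 <= m < K) z (m + a)%N * z (m + a + j)%N = cc z K j.
Proof.
move=> z0 zK aQ; rewrite /cc.
apply: (sum_shift_zero (g := fun k => z k * z (k + j)%N)).
- by move=> k ka; rewrite z0 ?mul0r //; exact: leq_trans ka aQ.
- by move=> k Kk; rewrite zK ?mul0r.
Qed.

Lemma sum_rev1 (R : realFieldType) (F : nat -> R) (n : nat) :
  \sum_(0 <= a < n) F (n - a)%N = \sum_(1 <= j < n.+1) F j.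
Proof.
rewrite big_add1 /= big_nat_rev /=; apply: eq_big_nat => i /andP[_ hi].
congr F; rewrite add0n; lia.
Qed.

Lemma window_id (R : realFieldType) (z : nat -> R) (K Q q : nat) :
  (forall k, (k < Q)%N -> z k = 0) -> (forall k, (K <= k)%N -> z k = 0) ->
  (q <= Q)%N ->
  \sum_(0 <= m < K) (Sw z q m) ^+ 2 =
  (q.+1)%:R * cc z K 0 + 2 * \sum_(1 <= j < q.+1) ((q.+1)%:R - j%:R) * cc z K j.
Proof.
move=> z0 zK; elim: q => [_|q IH qQ].
  rewrite [X in 2 * X]big_geq // mulr0 addr0 mul1r /cc; apply: eq_bigr => m _.
  by rewrite /Sw big_nat1 expr2 !addn0.
have IH' := IH (ltnW qQ).
have eS m : Sw z q.+1 m = Sw z q m + z (m + q.+1)%N.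
  by rewrite /Sw big_nat_recr.
under eq_bigr do rewrite eS sqrrD -mulr_natr.
rewrite big_split big_split /= IH' -big_distrl /=.
have e1 : \sum_(0 <= m < K) Sw z q m * z (m + q.+1)%N =
          \sum_(1 <= j < q.+2) cc z K j.
  rewrite -sum_rev1.
  under eq_bigr do rewrite /Sw big_distrl /=.
  rewrite exchange_big /=; apply: eq_big_nat => a /andP[_ ha].
  rewrite -(cc_shift _ z0 zK (ltnW (leq_trans ha qQ))).
  by apply: eq_bigr => m _; rewrite -addnA subnKC // ltnW.
have e2 : \sum_(0 <= m < K) z (m + q.+1)%N ^+ 2 = cc z K 0.
  rewrite -(cc_shift 0 z0 zK qQ); apply: eq_bigr => m _.
  by rewrite addn0 expr2.
rewrite e1 e2.
have e3 : \sum_(1 <= j < q.+2) ((q.+2)%:R - j%:R) * cc z K j =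
   \sum_(1 <= j < q.+1) ((q.+1)%:R - j%:R) * cc z K j + \sum_(1 <= j < q.+2) cc z K j.
  have e3' : \sum_(1 <= j < q.+1) ((q.+1)%:R - j%:R) * cc z K j =
     \sum_(1 <= j < q.+2) ((q.+1)%:R - j%:R) * cc z K j.
    by rewrite [RHS](@big_nat_recr _ _ _ q.+1 1) //= subrr mul0r addr0.
  rewrite e3' -big_split /=; apply: eq_bigr => j _.
  by rewrite -[(q.+2)%:R]natr1; ring.
rewrite e3; rewrite -[(q.+2)%:R]natr1; ring.
Qed.

Definition zz (R : ringType) (u : nat -> R) (n Q k : nat) : R :=
  ((Q <= k) && (k < Q + n))%N%:R * u (k.+1 - Q)%N.

Lemma gam_cc (R : realFieldType) (u : nat -> R) (n Q j : nat) :
  \sum_(1 <= i < (n - j).+1) u i * u (i + j)%N = cc (zz u n Q) (n + Q) j.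
Proof.
rewrite /cc sum_shift_zero2; last first.
  by move=> k kQ; rewrite /zz; case: leqP kQ => //; rewrite mul0r mul0r.
rewrite (@sum_tail_zero _ _ (n - j)%N n) ?leq_subr //; last first.
  move=> k hk; rewrite /zz.
  have -> : ((Q <= k + Q + j) && (k + Q + j < Q + n))%N = false.
    apply/negbTE; rewrite negb_and; apply/orP; right; rewrite -leqNgt; lia.
  by rewrite mul0r mulr0.
rewrite big_add1 /=; apply: eq_big_nat => i /andP[_ hi].
rewrite /zz.
have -> : ((Q <= i + Q) && (i + Q < Q + n))%N = true by apply/andP; split; lia.
have -> : ((Q <= i + Q + j) && (i + Q + j < Q + n))%N = true by apply/andP; split; lia.
rewrite !mul1r; congr (u _ * u _); lia.
Qed.

Lemma bartlett_alg (R : realFieldType) (c : nat -> R) (n Q : nat) : (0 < n)%N ->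
  n%:R^-1 * c 0%N + 2 * \sum_(1 <= j < Q.+1) (1 - j%:R / Q.+1%:R) * (n%:R^-1 * c j) =
  (n%:R * Q.+1%:R)^-1 *
    ((Q.+1)%:R * c 0%N + 2 * \sum_(1 <= j < Q.+1) ((Q.+1)%:R - j%:R) * c j).
Proof.
move=> n0.
have nn : n%:R != 0 :> R by rewrite pnatr_eq0 -lt0n.
have qn : Q.+1%:R != 0 :> R by rewrite pnatr_eq0.
have qn' : 1 + Q%:R != 0 :> R by rewrite addrC natr1.
rewrite mulrDr; congr (_ + _).
  by field; rewrite qn' nn.
rewrite [RHS]mulrCA; congr (_ * _); rewrite big_distrr /=.
apply: eq_bigr => j _; rewrite invfM.
by field; rewrite qn' nn.
Qed.

Lemma acov_bound d (T : measurableType d) (R : realType) (P : probability T R)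
  (Y : nat -> T -> R) (s : seq int) :
  (\esum_(j in [set: int]) (`|acov P Y j|)%:E < +oo)%E -> uniq s ->
  \sum_(j <- s) `|acov P Y j| <= fine (\esum_(j in [set: int]) (`|acov P Y j|)%:E)%E.
Proof.
move=> hG us.
set E := (\esum_(j in [set: int]) _)%E in hG *.
have E0 : (0 <= E)%E by apply: esum_ge0 => j _.
have Ef : E \is a fin_num by rewrite ge0_fin_numE.
rewrite -lee_fin fineK //.
apply: esum_ge; exists [set` s]; first by split => //; exact: finite_seq.
by rewrite -fsbig_seq // sumEFin.
Qed.

Definition Int d (T : measurableType d) (R : realType) (P : probability T R)
  (f : T -> R) := P.-integrable setT (EFin \o f).

Lemma Ex_int d (T : measurableType d) (R : realType) (P : probability T R) f :
  Int P f -> (\int[P]_w (f w)%:E)%E = (Ex P f)%:E.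
Proof.
move=> hf; rewrite /Ex unlock fineK //; exact: integrable_fin_num hf.
Qed.

Lemma IntD d (T : measurableType d) (R : realType) (P : probability T R) f g :
  Int P f -> Int P g -> Int P (fun w => f w + g w).
Proof.
move=> hf hg; rewrite /Int.
have -> : EFin \o (fun w => f w + g w) = (EFin \o f) \+ (EFin \o g) by apply/funext => w.
exact: integrableD.
Qed.

Lemma IntZ d (T : measurableType d) (R : realType) (P : probability T R) k f :
  Int P f -> Int P (fun w => k * f w).
Proof.
move=> hf; rewrite /Int.
have -> : EFin \o (fun w => k * f w) = (fun w => (k%:E * (EFin \o f) w)%E) by apply/funext => w.
exact: integrableZl.
Qed.

Lemma Int_sum d (T : measurableType d) (R : realType) (P : probability T R)
  (I : Type) (s : seq I) (F : I -> T -> R) :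
  (forall i, Int P (F i)) -> Int P (fun w => \sum_(i <- s) F i w).
Proof.
move=> hF; elim: s => [|i s IH].
  have -> : (fun w => \sum_(i <- [::]) F i w) = (fun=> 0) by apply/funext => w; rewrite big_nil.
  exact: finite_measure_integrable_cst.
have -> : (fun w => \sum_(j <- i :: s) F j w) = (fun w => F i w + \sum_(j <- s) F j w).
  by apply/funext => w; rewrite big_cons.
exact: IntD.
Qed.

Lemma ExD d (T : measurableType d) (R : realType) (P : probability T R) f g :
  Int P f -> Int P g -> Ex P (fun w => f w + g w) = Ex P f + Ex P g.
Proof.
move=> hf hg; apply: EFin_inj; rewrite EFinD -!Ex_int //; last exact: IntD.
exact: (integralD measurableT hf hg).
Qed.

Lemma ExZ d (T : measurableType d) (R : realType) (P : probability T R) k f :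
  Int P f -> Ex P (fun w => k * f w) = k * Ex P f.
Proof.
move=> hf; apply: EFin_inj; rewrite EFinM -!Ex_int //; last exact: IntZ.
exact: (integralZl measurableT hf).
Qed.

Lemma Ex_sum d (T : measurableType d) (R : realType) (P : probability T R)
  (I : Type) (s : seq I) (F : I -> T -> R) :
  (forall i, Int P (F i)) -> Ex P (fun w => \sum_(i <- s) F i w) = \sum_(i <- s) Ex P (F i).
Proof.
move=> hF; elim: s => [|i s IH].
  rewrite big_nil; apply: EFin_inj; rewrite -Ex_int; last first.
    have -> : (fun w => \sum_(i <- [::]) F i w) = (fun=> 0) by apply/funext => w; rewrite big_nil.
    exact: finite_measure_integrable_cst.
  under eq_integral do rewrite big_nil.
  exact: integral0.
rewrite big_cons -IH -ExD //; last exact: Int_sum.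
by congr (Ex P _); apply/funext => w; rewrite big_cons.
Qed.

Lemma Ex_le d (T : measurableType d) (R : realType) (P : probability T R) f g :
  Int P f -> Int P g -> (forall w, f w <= g w) -> Ex P f <= Ex P g.
Proof.
move=> hf hg fg; rewrite -lee_fin -!Ex_int //.
by apply: le_integral => // w _; rewrite lee_fin.
Qed.

Lemma aux_prod (R : realFieldType) (x y A B : R) : 0 <= x -> 0 <= y -> 0 <= A -> 0 <= B ->
  x ^+ 2 <= A + 1 -> y ^+ 2 <= B + 1 -> x * y <= A + B + 1.
Proof. move=> *; have := sqr_ge0 (x - y); nra. Qed.

Lemma IntYY d (T : measurableType d) (R : realType) (P : probability T R) Y i l :
  fourth_order_stationary P Y -> Int P (fun w => Y i w * Y l w).
Proof.
case=> mY iY _.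
have mYi := mY i; have mYl := mY l.
apply: (@le_integrable _ _ _ P setT measurableT _
   (EFin \o (fun w => Y i w ^+ 4 + Y l w ^+ 4 + 1))).
- by apply/mEFinP; exact: mfunM.
- move=> w _ /=; rewrite lee_fin.
  set a := Y i w; set b := Y l w.
  have h4 : 0 <= a ^+ 4 + b ^+ 4 + 1 by rewrite -addrA addr_ge0 // ?addr_ge0 // exprn_even_ge0.
  rewrite (ger0_norm h4) normrM.
  have ha : `|a| ^+ 2 <= a ^+ 4 + 1.
    rewrite -[a ^+ 4](@ger0_norm _ (a ^+ 4)) ?exprn_even_ge0 // normrX.
    have := normr_ge0 a; set x := `|a|; nra.
  have hb : `|b| ^+ 2 <= b ^+ 4 + 1.
    rewrite -[b ^+ 4](@ger0_norm _ (b ^+ 4)) ?exprn_even_ge0 // normrX.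
    have := normr_ge0 b; set x := `|b|; nra.
  apply: aux_prod => //; rewrite exprn_even_ge0 //.
- apply: IntD; [apply: IntD|]; [exact: iY|exact: iY|].
  exact: finite_measure_integrable_cst.
Qed.

Lemma ExYY d (T : measurableType d) (R : realType) (P : probability T R) Y (i l : nat) :
  fourth_order_stationary P Y -> (forall k, Ex P (Y k) = 0) ->
  Ex P (fun w => Y i w * Y l w) = acov P Y (l%:Z - i%:Z).
Proof.
case=> _ _ [_ st2 _ _] hm.
rewrite /acov /cov !hm.
have e0 : forall h, Ex P (fun w => (Y 0%N w - 0) * (Y h w - 0)) = Ex P (fun w => Y 0%N w * Y h w).
  by move=> h; congr (Ex P _); apply/funext => w; rewrite !subr0.
rewrite e0.
case: (leqP i l) => il.
  have -> : absz (l%:Z - i%:Z) = (l - i)%N by rewrite subzn.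
  by rewrite -(st2 i 0%N (l - i)%N) addn0 subnKC.
have -> : absz (l%:Z - i%:Z) = (i - l)%N.
  rewrite -abszN opprB subzn //; exact: (ltnW il).
rewrite -(st2 l 0%N (i - l)%N) addn0 subnKC; last exact: (ltnW il).
by congr (Ex P _); apply/funext => w; rewrite mulrC.
Qed.

Lemma sq_sum (R : comRingType) (I : Type) (s : seq I) (x : I -> R) :
  (\sum_(a <- s) x a) ^+ 2 = \sum_(a <- s) \sum_(b <- s) x a * x b.
Proof. by rewrite expr2 big_distrl; apply: eq_bigr => a _; rewrite big_distrr. Qed.

Lemma L2 d (T : measurableType d) (R : realType) (P : probability T R) Y
  (N : nat) (c : nat -> R) (f : nat -> nat) :
  fourth_order_stationary P Y -> (forall k, Ex P (Y k) = 0) ->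
  (\esum_(j in [set: int]) (`|acov P Y j|)%:E < +oo)%E ->
  (forall a, `|c a| <= 1) ->
  (forall a b, (a < N)%N -> (b < N)%N -> c a != 0 -> c b != 0 -> f a = f b -> a = b) ->
  Int P (fun w => (\sum_(0 <= a < N) c a * Y (f a) w) ^+ 2) /\
  Ex P (fun w => (\sum_(0 <= a < N) c a * Y (f a) w) ^+ 2) <=
    (\sum_(0 <= a < N) `|c a|) *
       fine (\esum_(j in [set: int]) (`|acov P Y j|)%:E)%E.
Proof.
move=> st hm hG hc hinj.
set G := fine _.
have eF : (fun w => (\sum_(0 <= a < N) c a * Y (f a) w) ^+ 2) =
  (fun w => \sum_(a <- index_iota 0 N) \sum_(b <- index_iota 0 N)
        (c a * c b) * (Y (f a) w * Y (f b) w)).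
  apply/funext => w; rewrite sq_sum; apply: eq_bigr => a _; apply: eq_bigr => b _.
  by rewrite mulrACA.
have hI : forall a b, Int P (fun w => (c a * c b) * (Y (f a) w * Y (f b) w)).
  by move=> a b; apply: IntZ; exact: IntYY.
rewrite eF; split.
  by apply: Int_sum => a; apply: Int_sum => b; exact: hI.
rewrite Ex_sum; last by move=> a; apply: Int_sum => b; exact: hI.
rewrite big_distrl /=; apply: ler_sum => a _.
rewrite Ex_sum; last by move=> b; exact: hI.
under eq_bigr => b _ do rewrite (ExZ _ (IntYY (f a) (f b) st)) (ExYY (f a) (f b) st hm).
have hG0 := fun s => @acov_bound _ _ _ P Y s hG.
apply: (le_trans (ler_norm _)); apply: (le_trans (ler_norm_sum _ _ _)).
under eq_bigr do rewrite normrM normrM -mulrA.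
rewrite -big_distrr /=; apply: ler_wpM2l => //.
apply: (@le_trans _ _ (\sum_(b <- index_iota 0 N | c b != 0) `|acov P Y ((f b)%:Z - (f a)%:Z)|)).
  rewrite [leRHS]big_mkcond /=; apply: ler_sum => b _.
  case: eqP => [->|_]; first by rewrite normr0 mul0r.
  by rewrite ler_piMl // hc.
rewrite -big_filter -(big_map (fun b => (f b)%:Z - (f a)%:Z) xpredT (fun j => `|acov P Y j|)).
apply: hG0; rewrite map_inj_in_uniq ?filter_uniq ?iota_uniq //.
move=> b1 b2; rewrite !mem_filter !mem_index_iota => /andP[h1 /andP[_ l1]] /andP[h2 /andP[_ l2]].
move=> /addIr [] e; exact: hinj.
Qed.

Lemma norm_sum_le (R : realFieldType) (x : nat -> R) (K : R) (m p : nat) :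
  (forall i, `|x i| <= K) -> `|\sum_(m <= i < p) x i| <= (p - m)%:R * K.
Proof.
move=> hx; apply: (le_trans (ler_norm_sum _ _ _)).
apply: (le_trans (ler_sum _ (fun i _ => hx i))).
by rewrite sumr_const_nat mulr_natl.
Qed.

Definition Ybar {T : Type} {R : realType} (Y : nat -> T -> R) (n : nat) (w : T) : R :=
  n%:R^-1 * \sum_(1 <= i < n.+1) Y i w.

Arguments Ybar : simpl never.

Definition Am {T : Type} {R : realType} (Y : nat -> T -> R) (n Q m : nat) (w : T) : R :=
  \sum_(0 <= a < Q.+1) ((Q <= m + a) && (m + a < Q + n))%N%:R * Y ((m + a).+1 - Q)%N w.

Arguments Am : simpl never.

Lemma s2_identity {T : Type} {R : realType} (X : nat -> nat -> T -> R) (q : nat -> nat)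
  (n : nat) (w : T) : (0 < n)%N ->
  let u := fun i => X n i w - Xbar X n w in
  s2 X q n w = (n%:R * (q n).+1%:R)^-1 *
     \sum_(0 <= m < n + q n) (Sw (zz u n (q n)) (q n) m) ^+ 2.
Proof.
move=> n0 u.
have eg : forall j, gammahat X n j w = n%:R^-1 * cc (zz u n (q n)) (n + q n) j.
  by move=> j; rewrite /gammahat -gam_cc.
rewrite /s2 !eg.
rewrite (window_id (Q := q n)) //; last 2 first.
- by move=> k kQ; rewrite /zz leqNgt kQ /= mul0r.
- move=> k hk; rewrite /zz.
  have -> : (k < q n + n)%N = false by apply/negbTE; rewrite -leqNgt; lia.
  by rewrite andbF mul0r.
rewrite -bartlett_alg //; congr (_ + 2 * _); apply: eq_bigr => j _; by rewrite eg.
Qed.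

Lemma u_minus_Y {T : Type} {R : realType} (mu theta : R) (Delta : nat -> R)
  (Y : nat -> T -> R) (n i : nat) (w : T) : (0 < n)%N ->
  `|Xcp mu Delta theta Y n i w - Xbar (Xcp mu Delta theta Y) n w - Y i w|
     <= `|Ybar Y n w| + 2 * `|Delta n|.
Proof.
move=> n0; set X := Xcp mu Delta theta Y.
pose Dd := fun i => X n i w - mu - Y i w.
have hD : forall i, `|Dd i| <= `|Delta n|.
  move=> k; rewrite /Dd /X /Xcp; case: ifP => _.
    by rewrite (_ : mu + Y k w - mu - Y k w = 0) ?normr0 //; ring.
  by rewrite (_ : mu + Delta n + Y k w - mu - Y k w = Delta n) //; ring.
have nn : n%:R != 0 :> R by rewrite pnatr_eq0 -lt0n.
have eX : Xbar X n w = mu + n%:R^-1 * \sum_(1 <= k < n.+1) Dd k + Ybar Y n w.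
  rewrite /Xbar /Ybar.
  have -> : \sum_(1 <= k < n.+1) X n k w =
            \sum_(1 <= k < n.+1) (Dd k + Y k w + (fun _ => mu) k).
    by apply: eq_bigr => k _; rewrite /Dd; ring.
  rewrite big_split big_split /= sumr_const_nat subn1 /=.
  rewrite -mulr_natr; field.
  by [].
rewrite eX.
have -> : X n i w - (mu + n%:R^-1 * \sum_(1 <= k < n.+1) Dd k + Ybar Y n w) - Y i w
   = Dd i - n%:R^-1 * \sum_(1 <= k < n.+1) Dd k - Ybar Y n w by rewrite /Dd; ring.
have hS : `|n%:R^-1 * \sum_(1 <= k < n.+1) Dd k| <= `|Delta n|.
  rewrite normrM normfV normr_nat ler_pdivrMl ?ltr0n //.
  by have := norm_sum_le 1 n.+1 hD; rewrite subn1.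
apply: (le_trans (ler_normB _ _)).
apply: (le_trans (lerD (ler_normB _ _) (lexx _))).
have := hD i; lra.
Qed.

Lemma aux_sq (R : realFieldType) (A r y D c : R) : 0 <= c ->
  `|r| <= c * (`|y| + 2 * `|D|) ->
  (A + r) ^+ 2 <= 2 * A ^+ 2 + 4 * c ^+ 2 * y ^+ 2 + 16 * c ^+ 2 * D ^+ 2.
Proof.
move=> c0 hr.
have hy : y ^+ 2 = `|y| ^+ 2 by rewrite real_normK ?num_real.
have hD : D ^+ 2 = `|D| ^+ 2 by rewrite real_normK ?num_real.
have hr2 : r ^+ 2 = `|r| ^+ 2 by rewrite real_normK ?num_real.
rewrite hy hD.
have := normr_ge0 r; have := normr_ge0 y; have := normr_ge0 D.
move: hr hr2; set a := `|r|; set b := `|y|; set d := `|D|.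
move=> hr hr2 d0 b0 a0.
have h1 : r ^+ 2 <= c ^+ 2 * (b + 2 * d) ^+ 2.
  by rewrite hr2 -exprMn !expr2; apply: ler_pM.
have h2 : (A + r) ^+ 2 <= 2 * A ^+ 2 + 2 * r ^+ 2 by have := sqr_ge0 (A - r); nra.
have h3 : (b + 2 * d) ^+ 2 <= 2 * b ^+ 2 + 8 * d ^+ 2 by have := sqr_ge0 (b - 2 * d); nra.
have h4 : c ^+ 2 * (b + 2 * d) ^+ 2 <= c ^+ 2 * (2 * b ^+ 2 + 8 * d ^+ 2).
  by apply: ler_wpM2l => //; exact: sqr_ge0.
nra.
Qed.

Lemma s2_bound {T : Type} {R : realType} (mu theta : R) (Delta : nat -> R)
  (Y : nat -> T -> R) (q : nat -> nat) (n : nat) (w : T) : (0 < n)%N ->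
  0 <= s2 (Xcp mu Delta theta Y) q n w /\
  s2 (Xcp mu Delta theta Y) q n w <=
    (n%:R * (q n).+1%:R)^-1 * (2 * \sum_(0 <= m < n + q n) Am Y n (q n) m w ^+ 2
      + 4 * (n + q n)%:R * (q n).+1%:R ^+ 2 * Ybar Y n w ^+ 2)
   + (n%:R * (q n).+1%:R)^-1 * (16 * (n + q n)%:R * (q n).+1%:R ^+ 2 * Delta n ^+ 2).
Proof.
move=> n0; rewrite s2_identity //.
set X := Xcp mu Delta theta Y; set Q := q n.
set u := fun i => X n i w - Xbar X n w.
have i0 : 0 <= (n%:R * Q.+1%:R)^-1 :> R by rewrite invr_ge0 mulr_ge0.
split; first by apply: mulr_ge0 => //; apply: sumr_ge0 => m _; exact: sqr_ge0.
rewrite -mulrDr; apply: ler_wpM2l => //.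
have hm : forall m, Sw (zz u n Q) Q m ^+ 2 <= 2 * Am Y n Q m w ^+ 2 +
     4 * Q.+1%:R ^+ 2 * Ybar Y n w ^+ 2 + 16 * Q.+1%:R ^+ 2 * Delta n ^+ 2.
  move=> m.
  have -> : Sw (zz u n Q) Q m = Am Y n Q m w + \sum_(0 <= a < Q.+1)
      ((Q <= m + a) && (m + a < Q + n))%N%:R * (u ((m + a).+1 - Q)%N - Y ((m + a).+1 - Q)%N w).
    rewrite /Sw /Am -big_split /=; apply: eq_bigr => a _; rewrite /zz; ring.
  apply: aux_sq => //.
  have := @norm_sum_le R (fun a => ((Q <= m + a) && (m + a < Q + n))%N%:R *
      (u ((m + a).+1 - Q)%N - Y ((m + a).+1 - Q)%N w)) (`|Ybar Y n w| + 2 * `|Delta n|) 0 Q.+1.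
  rewrite subn0; apply => a; rewrite normrM.
  have hb : `|((Q <= m + a) && (m + a < Q + n))%N%:R| <= 1 :> R.
    by case: (_ && _); rewrite ?normr0 ?normr1.
  apply: (le_trans (ler_wpM2r (normr_ge0 _) hb)); rewrite mul1r.
  exact: u_minus_Y.
apply: (le_trans (ler_sum _ (fun m _ => hm m))).
set c1 := 4 * _ * _; set c2 := 16 * _ * _.
have eR : \sum_(0 <= m < n + Q) (2 * Am Y n Q m w ^+ 2 + c1 + c2) =
   2 * \sum_(0 <= m < n + Q) Am Y n Q m w ^+ 2 + (n + Q)%:R * c1 + (n + Q)%:R * c2.
  by rewrite big_split big_split -big_distrr !sumr_const_nat subn0 -[c1 *+ _]mulr_natl -[c2 *+ _]mulr_natl.
rewrite eR /c1 /c2; apply: lerD; [apply: lerD => //|]; rewrite le_eqVlt; apply/orP; left; apply/eqP; ring.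
Qed.

Lemma G_ge0 d (T : measurableType d) (R : realType) (P : probability T R) Y :
  0 <= fine (\esum_(j in [set: int]) (`|acov P Y j|)%:E)%E.
Proof. by apply: fine_ge0; apply: esum_ge0 => j _. Qed.

Lemma EA2 d (T : measurableType d) (R : realType) (P : probability T R) Y (n Q m : nat) :
  fourth_order_stationary P Y -> (forall k, Ex P (Y k) = 0) ->
  (\esum_(j in [set: int]) (`|acov P Y j|)%:E < +oo)%E ->
  Int P (fun w => Am Y n Q m w ^+ 2) /\
  Ex P (fun w => Am Y n Q m w ^+ 2) <= Q.+1%:R * fine (\esum_(j in [set: int]) (`|acov P Y j|)%:E)%E.
Proof.
move=> st hm hG.
have hc : forall a, `|((Q <= m + a) && (m + a < Q + n))%N%:R| <= 1 :> R.
  by move=> a; case: (_ && _); rewrite ?normr0 ?normr1.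
have hinj : forall a b, (a < Q.+1)%N -> (b < Q.+1)%N ->
    ((Q <= m + a) && (m + a < Q + n))%N%:R != 0 :> R ->
    ((Q <= m + b) && (m + b < Q + n))%N%:R != 0 :> R ->
    ((m + a).+1 - Q)%N = ((m + b).+1 - Q)%N -> a = b.
  move=> a b _ _; case: andP => [[h1 _]|]; last by rewrite eqxx.
  case: andP => [[h2 _]|]; last by rewrite eqxx.
  move=> _ _; lia.
have [hI hE] := @L2 _ _ _ P Y Q.+1 (fun a => ((Q <= m + a) && (m + a < Q + n))%N%:R)
   (fun a => ((m + a).+1 - Q)%N) st hm hG hc hinj.
split; first exact: hI.
apply: (le_trans hE); apply: ler_wpM2r; first exact: G_ge0.
apply: (le_trans (ler_sum _ (fun a _ => hc a))).
by rewrite sumr_const_nat subn0.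
Qed.

Lemma EYbar2 d (T : measurableType d) (R : realType) (P : probability T R) Y (n : nat) :
  fourth_order_stationary P Y -> (forall k, Ex P (Y k) = 0) ->
  (\esum_(j in [set: int]) (`|acov P Y j|)%:E < +oo)%E -> (0 < n)%N ->
  Int P (fun w => Ybar Y n w ^+ 2) /\
  n%:R * Ex P (fun w => Ybar Y n w ^+ 2) <= fine (\esum_(j in [set: int]) (`|acov P Y j|)%:E)%E.
Proof.
move=> st hm hG n0.
have hc : forall a : nat, `|(fun=> 1 : R) a| <= 1 by move=> a; rewrite normr1.
have hinj : forall a b, (a < n)%N -> (b < n)%N -> (fun=> 1 : R) a != 0 -> (fun=> 1 : R) b != 0 ->
  a.+1 = b.+1 -> a = b by move=> a b _ _ _ _ [].
have [hI hE] := @L2 _ _ _ P Y n (fun=> 1) S st hm hG hc hinj.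
have eY : (fun w => Ybar Y n w ^+ 2) =
   (fun w => (n%:R ^- 2) * (\sum_(0 <= a < n) 1 * Y a.+1 w) ^+ 2).
  apply/funext => w; rewrite /Ybar big_add1 /= exprMn exprVn; congr (_ * _ ^+ 2).
  by apply: eq_bigr => a _; rewrite mul1r.
rewrite eY; split; first exact: IntZ.
rewrite ExZ //.
have nn : 0 < n%:R :> R by rewrite ltr0n.
rewrite mulrA -[n%:R ^- 2]exprVn expr2 mulrA mulfV ?gt_eqF // mul1r.
rewrite ler_pdivrMl //; apply: (le_trans hE).
by rewrite normr1 sumr_const_nat subn0.
Qed.

Lemma aux_final (R : realFieldType) (N Q G a y : R) : 1 <= N -> 0 <= Q -> Q <= N -> 0 <= G ->
  a <= (N + Q) * (Q + 1) * G -> 0 <= y -> N * y <= G ->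
  (N * (Q + 1))^-1 * (2 * a + 4 * (N + Q) * (Q + 1) ^+ 2 * y) <= 20 * G.
Proof.
move=> N1 Q0 QN G0 ha y0 hy.
have p : 0 < N * (Q + 1) by apply: mulr_gt0; lra.
rewrite ler_pdivrMl //.
have h1 : 2 * a <= 4 * N * (Q + 1) * G.
  have : (N + Q) * (Q + 1) * G <= (2 * N) * (Q + 1) * G.
    apply: ler_wpM2r => //; apply: ler_wpM2r; lra.
  lra.
have h2 : (N + Q) * y <= 2 * G.
  have : (N + Q) * y <= (2 * N) * y by apply: ler_wpM2r => //; lra.
  lra.
have h3 : 4 * (N + Q) * (Q + 1) ^+ 2 * y <= 8 * (Q + 1) ^+ 2 * G.
  have -> : 4 * (N + Q) * (Q + 1) ^+ 2 * y = 4 * (Q + 1) ^+ 2 * ((N + Q) * y) by ring.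
  have : 0 <= 4 * (Q + 1) ^+ 2 by apply: mulr_ge0 => //; exact: sqr_ge0.
  move=> hq; have := ler_wpM2l hq h2; lra.
have h4 : 8 * (Q + 1) ^+ 2 * G <= 16 * N * (Q + 1) * G.
  have -> : 8 * (Q + 1) ^+ 2 * G = (8 * (Q + 1) * G) * (Q + 1) by ring.
  have -> : 16 * N * (Q + 1) * G = (8 * (Q + 1) * G) * (2 * N) by ring.
  apply: ler_wpM2l; last lra.
  apply: mulr_ge0 => //; lra.
lra.
Qed.

Lemma Ex_ge0 d (T : measurableType d) (R : realType) (P : probability T R) f :
  (forall w, 0 <= f w) -> 0 <= Ex P f.
Proof.
move=> f0; rewrite /Ex unlock; apply: fine_ge0; apply: integral_ge0 => w _.
by rewrite lee_fin.
Qed.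

Definition Zt {T : Type} {R : realType} (Y : nat -> T -> R) (n Q : nat) (w : T) : R :=
  (n%:R * Q.+1%:R)^-1 * (2 * \sum_(0 <= m < n + Q) Am Y n Q m w ^+ 2
      + 4 * (n + Q)%:R * Q.+1%:R ^+ 2 * Ybar Y n w ^+ 2).

Lemma EZt d (T : measurableType d) (R : realType) (P : probability T R) Y (n Q : nat) :
  fourth_order_stationary P Y -> (forall k, Ex P (Y k) = 0) ->
  (\esum_(j in [set: int]) (`|acov P Y j|)%:E < +oo)%E -> (0 < n)%N -> (Q <= n)%N ->
  Int P (Zt Y n Q) /\
  Ex P (Zt Y n Q) <= 20 * fine (\esum_(j in [set: int]) (`|acov P Y j|)%:E)%E.
Proof.
move=> st hm hG n0 Qn.
set G := fine _.
have hA := fun m => EA2 n Q m st hm hG.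
have [hYI hYE] := EYbar2 st hm hG n0.
have hS : Int P (fun w => \sum_(0 <= m < n + Q) Am Y n Q m w ^+ 2).
  by apply: Int_sum => m; case: (hA m).
have hB : Int P (fun w => 4 * (n + Q)%:R * Q.+1%:R ^+ 2 * Ybar Y n w ^+ 2) by exact: IntZ.
have hI : Int P (Zt Y n Q).
  by apply: IntZ; apply: IntD => //; exact: IntZ.
split => //.
rewrite /Zt ExZ; last by apply: IntD => //; exact: IntZ.
rewrite ExD //; last exact: IntZ.
rewrite ExZ // ExZ // Ex_sum; last by move=> m; case: (hA m).
have -> : (n%:R * Q.+1%:R)^-1 = (n%:R * (Q%:R + 1))^-1 :> R by rewrite -natr1.
have -> : Q.+1%:R = Q%:R + 1 :> R by rewrite -natr1.
rewrite natrD.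
apply: aux_final.
- by rewrite ler1n.
- by [].
- by rewrite ler_nat.
- exact: G_ge0.
- apply: (le_trans (ler_sum _ (fun m _ => proj2 (hA m)))).
  rewrite sumr_const_nat subn0 -[_ *+ (n + Q)]mulr_natl natrD -natr1 /G le_eqVlt; apply/orP; left; apply/eqP; ring.
- by apply: Ex_ge0 => w; exact: sqr_ge0.
- exact: hYE.
Qed.

Lemma m_s2 d (T : measurableType d) (R : realType) (mu theta : R) (Delta : nat -> R)
  (Y : nat -> T -> R) (q : nat -> nat) (n : nat) :
  (forall k, measurable_fun setT (Y k)) ->
  measurable_fun setT (s2 (Xcp mu Delta theta Y) q n).
Proof.
move=> mY.
have mX : forall i, measurable_fun setT (Xcp mu Delta theta Y n i).
  move=> i; rewrite /Xcp; case: (i <= _)%N.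
    by apply: mfunD => //; exact: measurable_cst.
  by apply: mfunD => //; exact: measurable_cst.
have mXb : measurable_fun setT (Xbar (Xcp mu Delta theta Y) n).
  rewrite /Xbar; apply: mfunM; first exact: measurable_cst.
  by apply: measurable_sum => i.
have mg : forall j, measurable_fun setT (gammahat (Xcp mu Delta theta Y) n j).
  move=> j; rewrite /gammahat; apply: mfunM; first exact: measurable_cst.
  apply: measurable_sum => i; apply: mfunM; exact: mfunB.
rewrite /s2; apply: mfunD => //; apply: mfunM; first exact: measurable_cst.
apply: measurable_sum => j; apply: mfunM => //; exact: measurable_cst.
Qed.

Lemma markov_Ex d (T : measurableType d) (R : realType) (P : probability T R) (Z : T -> R) (t : R) :
  Int P Z -> (forall w, 0 <= Z w) -> 0 < t ->
  measurable [set w | t < Z w] /\ (P [set w | (t < Z w)%R] <= (Ex P Z / t)%:E)%E.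
Proof.
move=> hZ Z0 t0.
have mZ : measurable_fun setT Z by apply/mEFinP; exact: (measurable_int _ hZ).
have mA : measurable [set w | t < Z w].
  have := mZ measurableT _ (@measurable_itv _ `]t, +oo[).
  rewrite setTI; congr measurable; apply/seteqP; split => w /=; rewrite in_itv /= andbT //.
split => //.
set A := [set w | t < Z w].
have hind : P.-integrable setT (fun w => (t%:E * (\1_A w)%:E)%E).
  exact: integrableZl (integrable_indic _ mA).
have h1 : (t%:E * P A <= (Ex P Z)%:E)%E.
  rewrite -Ex_int // -[A in P A]setIT -integral_indic // -integralZl //; last exact: integrable_indic.
  apply: le_integral => //= w _; rewrite -EFinM lee_fin.
  rewrite /indic; case: (boolP (w \in A)) => wA.
    by rewrite mulr1; move: wA; rewrite inE => /ltW.
  by rewrite mulr0.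
have pf : P A \is a fin_num by rewrite fin_num_measure.
rewrite -(fineK pf) lee_fin ler_pdivlMr // mulrC -lee_fin EFinM fineK //.
Qed.

Lemma aux_D (R : realFieldType) (N Q D C : R) : 1 <= N -> 1 <= Q -> Q <= N -> 0 <= D ->
  `|Q * D| <= C ->
  (N * (Q + 1))^-1 * (16 * (N + Q) * (Q + 1) ^+ 2 * D) <= 64 * C.
Proof.
move=> N1 Q1 QN D0 hC.
have p : 0 < N * (Q + 1) by apply: mulr_gt0; lra.
rewrite ler_pdivrMl //.
have hQD : Q * D <= C by apply: le_trans (ler_norm _) hC.
have e : 16 * (N + Q) * (Q + 1) ^+ 2 * D = (Q + 1) * (16 * ((N + Q) * ((Q + 1) * D))) by ring.
have e2 : 64 * C * (N * (Q + 1)) = (Q + 1) * (64 * (N * C)) by ring.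
rewrite e; rewrite [leRHS]mulrC e2; apply: ler_wpM2l; first lra.
have h1 : (Q + 1) * D <= 2 * (Q * D) by have := ler_wpM2r D0 (_ : Q + 1 <= 2 * Q); rewrite mulrA; apply; lra.
have h2 : (N + Q) * ((Q + 1) * D) <= (2 * N) * (2 * (Q * D)).
  apply: ler_pM => //; [lra| apply: mulr_ge0 => //; lra| lra].
have h3 : (2 * N) * (2 * (Q * D)) <= (2 * N) * (2 * C) by apply: ler_wpM2l; lra.
lra.
Qed.

Theorem propositionD1 (d : measure_display) (T : measurableType d) (R : realType)
  (P : probability T R) (Y : nat -> T -> R) (mu theta : R) (Delta : nat -> R)
  (q : nat -> nat) :
  fourth_order_stationary P Y ->
  (forall k, Ex P (Y k) = 0) ->
  fclt P Y ->
  (\esum_(j in [set: int]) (`|acov P Y j|)%:E < +oo)%E ->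
  (exists C : R, forall h : int,
     (\esum_(rs in [set: int * int]) (`|kappa P Y h rs.1 rs.2|)%:E <= C%:E)%E) ->
  0 < theta < 1 ->
  (fun n => n%:R * Delta n ^+ 2) @ \oo --> +oo ->
  bounded_in_prob P (fun n w =>
    Delta n ^+ 2 * `|(khat (Xcp mu Delta theta Y) n w)%:R - (kstar theta n)%:R|) ->
  (exists C : R, exists N : nat, forall n, (N <= n)%N -> `|(q n)%:R * Delta n ^+ 2| <= C) ->
  (forall n, (0 < q n)%N) ->
  (fun n => (q n)%:R : R) @ \oo --> +oo ->
  (fun n => (q n)%:R / n%:R : R) @ \oo --> (0 : R) ->
  bounded_in_prob P (s2 (Xcp mu Delta theta Y) q).
Proof.
move=> st hm _ hG _ _ _ _ [C [N1 hC]] q0 _ hqn.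
set G := fine (\esum_(j in [set: int]) (`|acov P Y j|)%:E)%E.
have G0 : 0 <= G by exact: G_ge0.
have [N2 _ hN2] : \forall n \near \oo, ((q n)%:R / n%:R : R) < 1.
  by apply: (cvgr_lt _ hqn); rewrite ltr01.
move=> eps eps0.
set B := 20 * G.
set t := (B + 1) / eps.
have B0 : 0 <= B by rewrite /B; lra.
have t0 : 0 < t by apply: divr_gt0 => //; lra.
exists (64 * C + t), (maxn 1 (maxn N1 N2)) => n.
rewrite !geq_max => /andP[n1 /andP[nN1 nN2]].
have n0 : (0 < n)%N by [].
have hCn := hC n nN1.
have Qn : (q n <= n)%N.
  have := hN2 n nN2; rewrite ltr_pdivrMr ?ltr0n // mul1r ltr_nat; exact: ltnW.
set X := Xcp mu Delta theta Y.
have [hZI hZE] := EZt st hm hG n0 Qn.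
have Z0 : forall w, 0 <= Zt Y n (q n) w.
  move=> w; rewrite /Zt; apply: mulr_ge0; first by rewrite invr_ge0 mulr_ge0.
  apply: addr_ge0; first by apply: mulr_ge0 => //; apply: sumr_ge0 => m _; exact: sqr_ge0.
  apply: mulr_ge0; last exact: sqr_ge0.
  by apply: mulr_ge0 => //; apply: mulr_ge0.
have [mA hA] := markov_Ex hZI Z0 t0.
have mS : measurable [set w | 64 * C + t < `|s2 X q n w|].
  have mY : forall k, measurable_fun setT (Y k) by case: st.
  have ms := @m_s2 _ _ _ mu theta Delta Y q n mY.
  have mn : measurable_fun setT (fun w => `|s2 X q n w|).
    exact: (measurableT_comp (@measurable_realfun.normr_measurable R setT) ms).
  have := mn measurableT _ (@measurable_itv _ `]64 * C + t, +oo[).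
  rewrite setTI; congr measurable; apply/seteqP; split => w /=; rewrite in_itv /= andbT //.
have hsub : [set w | 64 * C + t < `|s2 X q n w|] `<=` [set w | t < Zt Y n (q n) w].
  move=> w /= hw.
  have [s0 sle] := s2_bound mu theta Delta Y q w n0.
  have hD := aux_D (N := n%:R) (Q := (q n)%:R) (D := Delta n ^+ 2) (C := C).
  rewrite natr1 -natrD in hD.
  have hD' := hD (_ : 1 <= n%:R) (_ : 1 <= (q n)%:R) (_ : (q n)%:R <= n%:R) (sqr_ge0 _) hCn.
  rewrite ler1n ler1n ler_nat in hD'.
  have := hD' n1 (q0 n) Qn.
  rewrite ger0_norm // in hw.
  have hw2 : 64 * C + t < s2 (Xcp mu Delta theta Y) q n w := hw.
  rewrite /Zt => h; clear -h hw2 sle.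
  set a := (_ * (2 * _ + _)) in sle *. set b := (_ * (16 * _ * _ * _)) in sle h. lra.
apply: (le_lt_trans (le_measure _ (mem_set mS) (mem_set mA) hsub)).
apply: (le_lt_trans hA); rewrite lte_fin.
apply: (@le_lt_trans _ _ (B / t)).
  by apply: ler_wpM2r; [rewrite invr_ge0 ltW | exact: hZE].
rewrite /t invf_div mulrA ltr_pdivrMr; last lra.
rewrite mulrC ltr_pM2l //; lra.
Qed.
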